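(* Let $k\ge2$ and let $\mathcal{H}=(V,E)$ be a linear $k$-uniform hypergraph with $|V|=k^2$ and $|E|=k^2+1$, and let $e_0\in E$ be a hyperedge such that $\mathrm{deg}_{\mathcal{H}}(x)=k+1$ for all $x\in e_0$ and $\mathrm{deg}_{\mathcal{H}}(x)\ge k$ for all $x\in V\smallsetminus e_0$. Then (i) $\mathrm{deg}_{\mathcal{H}}(x)=k$ for all $x\in V\smallsetminus e_0$; (ii) $\mathrm{d}_{\mathcal{H}}(e)=k^2-k+1$ for all $e\in E\smallsetminus\{e_0\}$.
   Context: A hypergraph $\mathcal{H}=(V,E)$ has a finite vertex set $V$ and a finite set $E$ of nonempty subsets of $V$ (hyperedges). Linear: $|e\cap e'|\le1$ for distinct hyperedges; $k$-uniform: every hyperedge has $k$ elements. $\mathrm{deg}_{\mathcal{H}}(x)$ is the number of hyperedges containing $x$; $\mathrm{d}_{\mathcal{H}}(e)=|\{a\in E\smallsetminus\{e\}: a\cap e\ne\varnothing\}|$. *)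

(* Defs.v *)
From mathcomp Require Import all_boot.
Set Implicit Arguments. Unset Strict Implicit. Unset Printing Implicit Defensive.

(* A hypergraph on a finite vertex type V is a set E of hyperedges (finite
   subsets of V); V itself is the (finite) vertex set. *)

Definition hyperedges_nonempty (V : finType) (E : {set {set V}}) : Prop :=
  forall e, e \in E -> e != set0.

Definition linear_hg (V : finType) (E : {set {set V}}) : Prop :=
  forall e e', e \in E -> e' \in E -> e != e' -> #|e :&: e'| <= 1.

Definition uniform_hg (V : finType) (k : nat) (E : {set {set V}}) : Prop :=
  forall e, e \in E -> #|e| = k.

Definition hdeg (V : finType) (E : {set {set V}}) (x : V) : nat :=
  #|[set e in E | x \in e]|.

Definition edeg (V : finType) (E : {set {set V}}) (e : {set V}) : nat :=
  #|[set a in E | (a != e) && (a :&: e != set0)]|.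

(* Main.v *)
Require Import Defs.
From mathcomp Require Import all_boot zify.
Set Implicit Arguments. Unset Strict Implicit.

Lemma dc (V: finType) (S : {set {set V}}) (e : {set V}) :
  \sum_(a in S) #|a :&: e| = \sum_(x in e) #|[set a in S | x \in a]|.
Proof.
have H1 : forall a : {set V}, #|a :&: e| = \sum_(x in e) (x \in a : nat).
  move=> a; rewrite -sum1_card big_mkcond /= [RHS]big_mkcond /=.
  apply: eq_bigr => x _; rewrite in_setI andbC.
  by case: (x \in e); case: (x \in a).
have H2 : forall x, #|[set a in S | x \in a]| = \sum_(a in S) (x \in a : nat).
  move=> x; rewrite -sum1_card big_mkcond /= [RHS]big_mkcond /=.
  apply: eq_bigr => a _; rewrite inE.
  by case: (a \in S); case: (x \in a).
under eq_bigr do rewrite H1.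
rewrite exchange_big /=; apply: eq_bigr => x _; by rewrite H2.
Qed.

Lemma degm1 (V: finType) (E : {set {set V}}) a x : a \in E -> x \in a ->
  #|[set b in [set c in E | c != a] | x \in b]| = hdeg E x - 1.
Proof.
move=> aE xa; rewrite /hdeg.
have -> : [set e in E | x \in e] = a |: [set b in [set c in E | c != a] | x \in b].
  apply/setP => b; rewrite !inE; case: (eqVneq b a) => [->|_] /=; first by rewrite aE xa.
  by case: (b \in E).
rewrite cardsU1 !inE eqxx /=; lia.
Qed.

Lemma sum_ind (T : finType) (S : {set T}) (P : pred T) :
  \sum_(a in S) (P a : nat) = #|[set a in S | P a]|.
Proof.
rewrite -sum1_card big_mkcond /= [RHS]big_mkcond /=.
apply: eq_bigr => a _; rewrite inE.
by case: (a \in S); case: (P a).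
Qed.

Theorem proposition4p1 (k : nat) (V : finType) (E : {set {set V}}) (e0 : {set V}) :
  2 <= k ->
  hyperedges_nonempty E ->
  linear_hg E ->
  uniform_hg k E ->
  #|V| = k ^ 2 ->
  #|E| = k ^ 2 + 1 ->
  e0 \in E ->
  (forall x, x \in e0 -> hdeg E x = k + 1) ->
  (forall x, x \notin e0 -> k <= hdeg E x) ->
  (forall x, x \notin e0 -> hdeg E x = k) /\
  (forall e, e \in E -> e != e0 -> edeg E e = k ^ 2 - k + 1).
Proof.
move=> k2 _ lin unif HV HE e0E deg0 degC.
have ce0 : #|e0| = k by apply: unif.
have part1 : forall x, x \notin e0 -> hdeg E x = k.
  have := dc E [set: V].
  rewrite (eq_bigr (fun _ => k)); last by move=> a aE; rewrite setIT unif.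
  rewrite sum_nat_const HE (big_setID e0) setTI setTD /=.
  rewrite (eq_bigr (fun _ => k + 1)); last by move=> x xe; apply: deg0.
  rewrite sum_nat_const ce0.
  rewrite (eq_bigr (fun x => k + (hdeg E x - k))); last first.
    move=> x; rewrite inE => xn; have := degC x xn; by move=> h; rewrite subnKC.
  rewrite big_split /= sum_nat_const.
  have cC := cardsC e0; rewrite HV ce0 in cC.
  move=> Heq.
  have H0 : \sum_(i in ~: e0) (hdeg E i - k) = 0.
    have e1 : #|~: e0| = k ^ 2 - k by lia.
    rewrite e1 in Heq. nia.
  move=> x xn; move/eqP: H0; rewrite sum_nat_eq0 => /forallP /(_ x).
  rewrite inE xn /= => /eqP; have := degC x xn; lia.
split=> //.
have cS : forall a, a \in E -> #|[set c in E | c != a]| = k ^ 2.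
  move=> a aE.
  have -> : [set c in E | c != a] = E :\ a by apply/setP => c; rewrite !inE andbC.
  have := cardsD1 a E; rewrite aE HE; lia.
have Hmeet : forall a, a \in E -> a != e0 -> #|a :&: e0| = 1.
  have Hd := dc [set c in E | c != e0] e0.
  rewrite [X in _ = X](eq_bigr (fun _ => k)) in Hd; last first.
    by move=> x xe; rewrite degm1 // deg0 //; lia.
  rewrite sum_nat_const ce0 in Hd.
  have le1 : forall a, a \in [set c in E | c != e0] -> #|a :&: e0| <= 1.
    by move=> a; rewrite inE => /andP [aE ne]; apply: lin.
  have Hs : \sum_(a in [set c in E | c != e0]) (1 - #|a :&: e0|) = 0.
    have : \sum_(a in [set c in E | c != e0]) ((1 - #|a :&: e0|) + #|a :&: e0|)
          = #|[set c in E | c != e0]| * 1.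
      rewrite -sum_nat_const; apply: eq_bigr => a /le1; lia.
    rewrite big_split /= Hd cS //; lia.
  move=> a aE ne; move/eqP: Hs; rewrite sum_nat_eq0 => /forallP /(_ a).
  have aS : a \in [set c in E | c != e0] by rewrite inE aE ne.
  rewrite aS /= => /eqP; have := le1 a aS; lia.
move=> e eE ne.
have := dc [set c in E | c != e] e.
rewrite (eq_bigr (fun a => (a :&: e != set0) : nat)); last first.
  move=> a; rewrite inE => /andP [aE ane].
  have := lin a e aE eE ane; rewrite -cards_eq0.
  by case: #|a :&: e| => [|[|]].
rewrite sum_ind.
have -> : [set a in [set c in E | c != e] | a :&: e != set0] =
          [set a in E | (a != e) && (a :&: e != set0)].
  by apply/setP => a; rewrite !inE andbA.
rewrite -/(edeg E e) => ->.
have := Hmeet e eE ne; move/eqP/cards1P => [y Hy].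
have yI : y \in e :&: e0 by rewrite Hy set11.
have /setIP [ye ye0] := yI.
rewrite (big_setD1 y ye) /= degm1 // deg0 //.
rewrite (eq_bigr (fun _ => k - 1)); last first.
  move=> x; rewrite !inE => /andP [xy xe]; rewrite degm1 // part1 //.
  apply/negP => xe0.
  have : x \in e :&: e0 by rewrite inE xe xe0.
  by rewrite Hy inE (negbTE xy).
rewrite sum_nat_const.
have := cardsD1 y e; rewrite ye (unif e eE) => c1.
have c2 : #|e :\ y| = k - 1 by lia.
rewrite c2; nia.
Qed.
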